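(* Let $\rho$ be a partial density operator on the state space of a finite set of qubits, and let $\sigma$ be a stabilizer state, i.e. a function assigning to each stabilizer variable $\mathcal{s}$ a value $\sigma(\mathcal{s}) = c\cdot s$ with $c \in \{1,-1,i,-i\}$ and $s$ a Pauli string. Let $s_{e0}, s_{e1}, s_{e2}$ be stabilizer expressions. Then: (1) If $(\rho,\sigma) \models s_{e0}$ and $(\rho,\sigma) \models s_{e1}$, then $(\rho,\sigma) \models s_{e0}s_{e1}$ and $(\rho,\sigma) \models \lambda_0 s_{e0} + \lambda_1 s_{e1}$ for all $\lambda_0,\lambda_1 \in \mathbb{C}$ with $\lambda_0 + \lambda_1 = 1$. (2) If $s_{e0}$ is nonsingular (invertible), $(\rho,\sigma) \models s_{e0}$ and $(\rho,\sigma) \models s_{e1}s_{e0}$, then $(\rho,\sigma) \models s_{e1}$. (3) If $a,b \in \mathbb{C}$ satisfy $(a s_{e0} + b s_{e1})\rho = \rho$, every $\sigma(\mathcal{s})$ commutes with both $s_{e0}$ and $s_{e1}$, and $(\rho,\sigma) \models s_{e2}$, then $(\rho,\sigma) \models a s_{e0} + b\, s_{e1}s_{e2}$.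
   Context: A Pauli string (also called a stabilizer) is a tensor product of the single-qubit operators $I,X,Y,Z$ acting on finitely many qubits (identity elsewhere). Stabilizer expressions are the operators generated from Pauli strings by complex linear combinations: $s_e ::= s \mid \lambda_0 s_{e0} + \lambda_1 s_{e1}$ with $\lambda_0,\lambda_1 \in \mathbb{C}$; products of stabilizer expressions are again regarded as such operators. For an operator $O$ of this kind, the program state $(\rho,\sigma)$ satisfies $O$, written $(\rho,\sigma) \models O$, iff $O\rho = \rho$ and $O$ commutes with $\sigma(\mathcal{s})$ for every stabilizer variable $\mathcal{s}$ in the domain of $\sigma$. *)

(* Defs.v *)
From HB Require Import structures.
From mathcomp Require Import all_boot all_algebra.
From mathcomp Require Import Rstruct.
From mathcomp.real_closed Require Import complex.
Set Implicit Arguments. Unset Strict Implicit. Unset Printing Implicit Defensive.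
Import GRing.Theory Num.Theory.
Local Open Scope ring_scope.
Local Open Scope complex_scope.

Definition C : numClosedFieldType := (Rdefinitions.R)[i].

(* operators on the state space of n qubits : 2^n x 2^n complex matrices *)
Definition op (n : nat) := 'M[C]_(2 ^ n).

Definition adj {m p : nat} (A : 'M[C]_(m, p)) : 'M[C]_(p, m) :=
  \matrix_(i, j) (A j i)^*.

Definition psd {m : nat} (A : 'M[C]_m) : Prop :=
  forall v : 'cV[C]_m, 0 <= (adj v *m A *m v) 0 0.

Definition partial_density {n : nat} (rho : op n) : Prop :=
  psd rho /\ \tr rho <= 1.

Inductive pauli := PI | PX | PY | PZ.

Definition pauli_mx (p : pauli) : 'M[C]_2 :=
  match p with
  | PI => \matrix_(i < 2, j < 2) (if i == j then 1 else 0)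
  | PX => \matrix_(i < 2, j < 2) (if i == j then 0 else 1)
  | PY => \matrix_(i < 2, j < 2)
            (if i == j then 0 else if (i : nat) == 0%N then - 'i else 'i)
  | PZ => \matrix_(i < 2, j < 2)
            (if i == j then (if (i : nat) == 0%N then 1 else -1) else 0)
  end.

(* k-th bit of a basis index (basis state |b_{n-1} ... b_0>) *)
Definition qbit (k i : nat) : 'I_2 := inord ((i %/ 2 ^ k) %% 2).

(* Pauli string on n qubits: tensor product of p 0, ..., p (n-1) *)
Definition pstring (n : nat) := 'I_n -> pauli.

Definition pstring_mx {n : nat} (s : pstring n) : op n :=
  \matrix_(i, j) \prod_(k < n) pauli_mx (s k) (qbit k i) (qbit k j).

Inductive sexpr (n : nat) :=
  | SPauli of pstring n
  | SLin of C & sexpr n & C & sexpr n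
  | SMul of sexpr n & sexpr n.

Fixpoint sem {n : nat} (e : sexpr n) : op n :=
  match e with
  | SPauli s => pstring_mx s
  | SLin l0 e0 l1 e1 => l0 *: sem e0 + l1 *: sem e1
  | SMul e0 e1 => sem e0 *m sem e1
  end.

(* a stabilizer state value c * s with c in {1, -1, i, -i} = {i^k | k < 4} *)
Definition phased_pstring (n : nat) := ('I_4 * pstring n)%type.

Definition phased_mx {n : nat} (cs : phased_pstring n) : op n :=
  ('i ^+ cs.1) *: pstring_mx cs.2.

Definition sstate (V : Type) (n : nat) := V -> option (phased_pstring n).

Definition sat {V : Type} {n : nat} (rho : op n) (sigma : sstate V n)
    (O : op n) : Prop :=
  O *m rho = rho /\
  forall (x : V) (cs : phased_pstring n), sigma x = Some cs ->
    O *m phased_mx cs = phased_mx cs *m O.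

(* Main.v *)
Require Import Defs.
From HB Require Import structures.
From mathcomp Require Import all_boot all_algebra.
From mathcomp.real_closed Require Import complex.
Import GRing.Theory Num.Theory.
Local Open Scope ring_scope.

Theorem lemma2 (V : Type) (n : nat) (rho : op n) (sigma : sstate V n)
    (se0 se1 se2 : sexpr n) :
  partial_density rho ->
  (* (1) *)
  ((sat rho sigma (sem se0) -> sat rho sigma (sem se1) ->
     sat rho sigma (sem se0 *m sem se1) /\
     (forall l0 l1 : C, l0 + l1 = 1 ->
        sat rho sigma (l0 *: sem se0 + l1 *: sem se1)))
  /\
  (* (2) *)
  (sem se0 \in unitmx -> sat rho sigma (sem se0) ->
     sat rho sigma (sem se1 *m sem se0) -> sat rho sigma (sem se1))
  /\
  (* (3) *)
  (forall a b : C,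
     (a *: sem se0 + b *: sem se1) *m rho = rho ->
     (forall (x : V) (cs : phased_pstring n), sigma x = Some cs ->
        sem se0 *m phased_mx cs = phased_mx cs *m sem se0 /\
        sem se1 *m phased_mx cs = phased_mx cs *m sem se1) ->
     sat rho sigma (sem se2) ->
     sat rho sigma (a *: sem se0 + b *: (sem se1 *m sem se2)))).
Proof.
move=> _.
set A := sem se0; set B := sem se1; set D := sem se2.
split; [|split].
- move=> [HA CA] [HB CB]; split.
    split; first by rewrite -mulmxA HB HA.
    move=> x cs hx; by rewrite -mulmxA (CB x cs hx) !mulmxA (CA x cs hx).
  move=> l0 l1 hl; split.
    by rewrite mulmxDl -!scalemxAl HA HB -scalerDl hl scale1r.
  move=> x cs hx.
  move: (phased_mx cs) (CA x cs hx) (CB x cs hx) => P CAP CBP.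
  by rewrite mulmxDl mulmxDr -!scalemxAl CAP CBP !scalemxAr.
- move=> uA [HA CA] [HBA CBA]; split.
    by rewrite -{1}HA mulmxA HBA.
  move=> x cs hx; move: (phased_mx cs) (CA x cs hx) (CBA x cs hx) => P CAP CBAP.
  have CiA : invmx A *m P = P *m invmx A.
    by rewrite -[LHS]mulmx1 -(mulmxV uA) mulmxA -(mulmxA _ P) -CAP mulmxA mulVmx // mul1mx.
  have eB : B = B *m A *m invmx A by rewrite mulmxK.
  by rewrite {1}eB -mulmxA CiA mulmxA CBAP -!mulmxA mulmxV // mulmx1.
- move=> a b HL CC [HD CD]; split.
    by rewrite mulmxDl -!scalemxAl -mulmxA HD -[RHS]HL mulmxDl -!scalemxAl.
  move=> x cs hx; move: (phased_mx cs) (CC x cs hx) (CD x cs hx) => P [C0 C1] CDP.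
  by rewrite mulmxDl mulmxDr -!scalemxAl C0 -mulmxA CDP mulmxA C1 -mulmxA -(scalemxAr a P) -(scalemxAr b P).
Qed.
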